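(* Assume $\mathrm{recc}(C)\subseteq\mathrm{recc}(P^B)$. Fix $k\in N_2$ and assume $N_0\not\subseteq J$. If $M'=\emptyset$, then $\mathrm{cl}\,\mathrm{conv}(P^B\setminus S_k^C)=P^B$.
   Context: Let $A\in\mathbb{R}^{m\times n}$ have full row rank, $b\in\mathbb{R}^m$, and $P=\{x\in\mathbb{R}^n_+:Ax=b\}$. Let $C\subseteq\mathbb{R}^n$ be an open convex set. Fix a basis $B$ of $P$ with nonbasic set $N=\{1,\dots,n\}\setminus B$. Write $P=\{x:x_i=\bar b_i-\sum_{j\in N}\bar a_{ij}x_j\ (i\in B),\ x\ge0\}$ with $\bar b\ge0$. The basic solution $\bar x$ has $\bar x_i=\bar b_i$ ($i\in B$) and $0$ ($i\in N$). $P^B$ is obtained by dropping $x_i\ge0$ for $i\in B$. For $j\in N$, $\bar r^j$ has $\bar r^j_k=-\bar a_{kj}$ ($k\in B$), $\bar r^j_j=1$, and $0$ otherwise. Thus $P^B=\{\bar x+\sum_{j\in N}x_j\bar r^j:x_j\ge0\}$. It is assumed that $\bar x\notin\mathrm{cl}(C)$. For $j\in N$, $\alpha_j=\inf\{\lambda\ge0:\bar x+\lambda\bar r^j\in C\}$ and $\beta_j=\sup\{\lambda\ge0:\bar x+\lambda\bar r^j\in C\}$, with $\alpha_j=+\infty$, $\beta_j=-\infty$ if the halfline misses $C$. Define - $N_0=\{j:\alpha_j=+\infty,\beta_j=-\infty\}$; - $N_2=\{j:\alpha_j\in(0,\infty),\beta_j\in(\alpha_j,\infty)\}$. For a set $K$,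 $\mathrm{recc}(K)=\{d:x+\lambda d\in K\ \forall x\in K,\lambda\ge0\}$. For $k\in N_2$, $S_k^C=\{\bar x\}+\mathrm{conv}\big(\bigcup_{j\in N_2}\{\lambda\bar r^j:0\le\lambda<\beta_j\}\big)+\{\lambda\bar r^k:\lambda\le0\}+\mathrm{recc}(C)$. Let $J=\{i\in N:\bar r^i\in\mathrm{recc}(S_k^C)\}$. For $i\in J$, $j\in N\setminus J$, $\gamma'_{ij}=\sup\{\gamma\ge0:\bar r^i+\gamma\bar r^j\in\mathrm{recc}(S_k^C)\}$. Let $M'=\{i\in J:\gamma'_{ij}>0\ \forall j\in N\setminus J\}$. Here $\mathrm{cl}\,\mathrm{conv}$ is the closure of the convex hull. *)

(* Defs.v *)
From HB Require Import structures.
From mathcomp Require Import all_boot all_order all_algebra.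
From mathcomp Require Import all_classical all_reals all_analysis.
Set Implicit Arguments.
Unset Strict Implicit.
Unset Printing Implicit Defensive.
Import Order.TTheory GRing.Theory Num.Theory.
Import numFieldNormedType.Exports.
Local Open Scope classical_set_scope.
Local Open Scope ring_scope.

Section Defs.
Variable R : realType.

Definition recc (V : lmodType R) (K : set V) : set V :=
  [set d | forall x, K x -> forall lam : R, 0 <= lam -> K (x + lam *: d)].

Definition convhull (V : lmodType R) (X : set V) : set V :=
  [set x | exists (p : nat) (w : 'I_p -> R) (y : 'I_p -> V),
     (forall i, 0 <= w i) /\ \sum_(i < p) w i = 1 /\
     (forall i, X (y i)) /\ x = \sum_(i < p) w i *: y i].

Variable n : nat.
(* The basis B is given as a subset of {0..n-1}; N = ~: B.
   The tableau data: bbar i (i in B), abar i j (i in B, j in N). *)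
Variables (B : {set 'I_n}) (abar : 'I_n -> 'I_n -> R) (bbar : 'I_n -> R).

Definition xbar : 'cV[R]_n := \col_i (if i \in B then bbar i else 0).

Definition rbar (j : 'I_n) : 'cV[R]_n :=
  \col_k (if k \in B then - abar k j else if k == j then 1 else 0).

(* P^B : drop the nonnegativity constraints of the basic variables *)
Definition PB (m : nat) (A : 'M[R]_(m, n)) (b : 'cV[R]_m) : set 'cV[R]_n :=
  [set x | A *m x = b /\ forall j, j \in ~: B -> 0 <= x j 0].

Variable C : set 'cV[R]_n.

Definition hitset (j : 'I_n) : set R :=
  [set lam | 0 <= lam /\ C (xbar + lam *: rbar j)].

(* inf / sup in the extended reals; empty set gives +oo / -oo *)
Definition alpha (j : 'I_n) : \bar R := ereal_inf (EFin @` hitset j).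
Definition beta (j : 'I_n) : \bar R := ereal_sup (EFin @` hitset j).

Definition N0 : set 'I_n :=
  [set j | j \in ~: B /\ alpha j = +oo%E /\ beta j = -oo%E].

Definition N2 : set 'I_n :=
  [set j | j \in ~: B /\ (0 < alpha j)%E /\ (alpha j < +oo)%E /\
           (alpha j < beta j)%E /\ (beta j < +oo)%E].

Definition segs : set 'cV[R]_n :=
  [set v | exists j lam, N2 j /\ 0 <= lam /\ (lam%:E < beta j)%E /\
                        v = lam *: rbar j].

Definition SkC (k : 'I_n) : set 'cV[R]_n :=
  [set x | exists c (mu : R) d, convhull segs c /\ mu <= 0 /\ recc C d /\
           x = xbar + c + mu *: rbar k + d].

Definition Jset (k : 'I_n) : set 'I_n :=
  [set i | i \in ~: B /\ recc (SkC k) (rbar i)].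

Definition gamma' (k i j : 'I_n) : \bar R :=
  ereal_sup (EFin @` [set g : R | 0 <= g /\ recc (SkC k) (rbar i + g *: rbar j)]).

Definition M' (k : 'I_n) : set 'I_n :=
  [set i | Jset k i /\
     forall j, j \in ~: B -> ~ Jset k j -> (0 < gamma' k i j)%E].

End Defs.

(* Main.v *)
Require Import Defs.
From HB Require Import structures.
From mathcomp Require Import all_boot all_order all_algebra.
From mathcomp Require Import all_classical all_reals all_analysis.
From mathcomp Require Import ring lra.
Import Order.TTheory GRing.Theory Num.Theory.
Import numFieldNormedType.Exports.
Local Open Scope classical_set_scope.
Local Open Scope ring_scope.

Section P10.
Variables (R : realType) (m n : nat) (A : 'M[R]_(m, n)) (b : 'cV[R]_m)
  (B : {set 'I_n}) (abar : 'I_n -> 'I_n -> R) (bbar : 'I_n -> R)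
  (C : set 'cV[R]_n) (k : 'I_n).
Hypothesis hiff : forall x : 'cV[R]_n, A *m x = b <->
     (forall i, i \in B ->
        x i 0 = bbar i - \sum_(j in ~: B) abar i j * x j 0).
Hypothesis hrec : recc C `<=` recc (PB B A b).
Hypothesis hk : N2 B abar bbar C k.

Local Notation xb := (xbar B bbar).
Local Notation r := (rbar B abar).
Local Notation S := (SkC B abar bbar C k).
Local Notation D := (recc C).

Lemma xb_N l : l \in ~: B -> xb l 0 = 0.
Proof. by rewrite inE mxE => /negbTE ->. Qed.

Lemma xb_B l : l \in B -> xb l 0 = bbar l.
Proof. by rewrite mxE => ->. Qed.

Lemma r_N j l : l \in ~: B -> r j l 0 = (l == j)%:R.
Proof. by rewrite inE mxE => /negbTE ->; case: eqP. Qed.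

Lemma notB {l} : l \in ~: B -> (l \in B) = false.
Proof. by rewrite inE => /negbTE. Qed.

Lemma A_xb : A *m xb = b.
Proof.
apply/hiff => i iB; rewrite xb_B // big1 ?subr0 // => j jN.
by rewrite xb_N // mulr0.
Qed.

Lemma A_r j : j \in ~: B -> A *m r j = 0.
Proof.
move=> jN.
have h : A *m (xb + r j) = b.
  apply/hiff => i iB; rewrite !mxE iB.
  rewrite (bigD1 j) //= big1 ?addr0.
    have jB : j \notin B by rewrite inE in jN.
    by rewrite !mxE (negbTE jB) eqxx add0r mulr1.
  move=> l /andP [lN lj]; rewrite !mxE.
  have lB : l \notin B by rewrite inE in lN.
  by rewrite (negbTE lB) (negbTE lj) addr0 mulr0.
have -> : A *m r j = A *m (xb + r j) - A *m xb by rewrite mulmxDr addrAC subrr add0r.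
by rewrite h A_xb subrr.
Qed.

Lemma PB_xbv (v : 'cV[R]_n) : A *m v = 0 -> (forall l, l \in ~: B -> 0 <= v l 0) -> PB B A b (xb + v).
Proof.
move=> hv hl; split; first by rewrite mulmxDr A_xb hv addr0.
by move=> j jN; rewrite mxE xb_N // add0r hl.
Qed.

Lemma D_prop {d} : D d -> A *m d = 0 /\ (forall l, l \in ~: B -> 0 <= d l 0).
Proof.
move=> /hrec hd.
have hx0 : PB B A b xb.
  by rewrite -[xb]addr0; apply: PB_xbv; [exact: mulmx0 | move=> l _; rewrite mxE].
have [] := hd xb hx0 1 ler01.
rewrite scale1r mulmxDr A_xb => h1 h2; split.
  by apply: (addrI b); rewrite h1 addr0.
by move=> l lN; have := h2 l lN; rewrite mxE xb_N // add0r.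
Qed.

Lemma A_xbu_B (u : 'cV[R]_n) : A *m u = 0 -> forall i, i \in B ->
  u i 0 = - \sum_(j in ~: B) abar i j * u j 0.
Proof.
move=> hu i iB.
have h0 : A *m (xb + u) = b by rewrite mulmxDr A_xb hu addr0.
have := (hiff _).1 h0 i iB.
rewrite mxE xb_B //.
rewrite (eq_bigr (fun j => abar i j * u j 0)); last first.
  by move=> j jN; rewrite mxE xb_N // add0r.
move=> h; lra.
Qed.

Lemma uniqN (u v : 'cV[R]_n) : A *m u = 0 -> A *m v = 0 ->
  (forall l, l \in ~: B -> u l 0 = v l 0) -> u = v.
Proof.
move=> hu hv h; apply/matrixP => i j; rewrite (ord1 j).
case: (boolP (i \in B)) => iB.
  rewrite (A_xbu_B _ hu) // (A_xbu_B _ hv) //; congr (- _).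
  by apply: eq_bigr => l lN; rewrite h.
by apply: h; rewrite inE.
Qed.

Lemma D_add d1 d2 : D d1 -> D d2 -> D (d1 + d2).
Proof.
move=> h1 h2 x hx lam hlam; rewrite scalerDr addrA.
by apply: h2 => //; apply: h1.
Qed.

Lemma D_scale d s : D d -> 0 <= s -> D (s *: d).
Proof.
move=> h hs x hx lam hlam; rewrite scalerA.
by apply: h => //; apply: mulr_ge0.
Qed.

Lemma D0 : D 0.
Proof. by move=> x hx lam _; rewrite scaler0 addr0. Qed.

Lemma K_reccS d1 nu : D d1 -> 0 <= nu -> recc S (d1 - nu *: r k).
Proof.
move=> hd1 hnu x [c [mu [d [hc [hmu [hd ->]]]]]] lam hlam.
exists c, (mu - lam * nu), (d + lam *: d1); split => //; split.
  have := mulr_ge0 hlam hnu; lra.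
split; first by apply: D_add => //; apply: D_scale.
apply/matrixP => i j; rewrite !mxE; ring.
Qed.

Lemma beta_k_pos : (0 < beta B abar bbar C k)%E.
Proof.
case: hk => _ [h0 [_ [h1 _]]]; exact: lt_trans h0 h1.
Qed.

Lemma xb_S : S xb.
Proof.
exists 0, 0, 0; split.
  exists 1%N, (fun _ => 1), (fun _ => 0); split => //; split.
    by rewrite big_ord1.
  split; last by rewrite big_ord1 scaler0.
  move=> _; exists k, 0; split => //; split => //; split; last by rewrite scale0r.
  exact: beta_k_pos.
split => //; split; first exact: D0.
by rewrite scale0r !addr0.
Qed.


Definition U := \sum_(j < n) `|fine (beta B abar bbar C j)|.

Lemma U_ge0 : 0 <= U.
Proof. by apply: sumr_ge0 => j _; exact: normr_ge0. Qed.

Lemma le_U j : fine (beta B abar bbar C j) <= U.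
Proof.
rewrite /U (bigD1 j) //=; apply: le_trans (ler_norm _) _.
rewrite lerDl; by apply: sumr_ge0 => i _; exact: normr_ge0.
Qed.

Definition cprop (c : 'cV[R]_n) := forall l, l \in ~: B ->
  (0 <= c l 0 <= U) /\ (~ N2 B abar bbar C l -> c l 0 = 0).

Lemma seg_entries {v} : segs B abar bbar C v -> cprop v.
Proof.
move=> [j [lam [hj [hlam [hb ->]]]]] l lN.
rewrite mxE r_N //.
case: (eqVneq l j) => [-> | nlj]; last by rewrite mulr0 lexx U_ge0.
rewrite mulr1; split => //.
have hlt : lam < fine (beta B abar bbar C j).
  case: hj => _ [_ [_ [_ hbo]]].
  move: hb hbo; case: (beta B abar bbar C j) => [x | | ] //=.
by rewrite hlam /=; apply: le_trans (ltW hlt) (le_U j).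
Qed.

Lemma conv_entries c : convhull (segs B abar bbar C) c -> cprop c.
Proof.
move=> [p [w [y [hw [hs [hy ->]]]]]] l lN.
rewrite summxE.
have he : forall i, (w i *: y i) l 0 = w i * y i l 0 by move=> i; rewrite mxE.
rewrite (eq_bigr _ (fun i _ => he i)); split.
  apply/andP; split.
    apply: sumr_ge0 => i _; apply: mulr_ge0 => //.
    by have [/andP [] ] := seg_entries (hy i) l lN.
  apply: le_trans (_ : \sum_(i < p) w i * U <= U).
    apply: ler_sum => i _; apply: ler_wpM2l => //.
    by have [/andP [] ] := seg_entries (hy i) l lN.
  by rewrite -mulr_suml hs mul1r.
move=> hN; rewrite big1 // => i _.
by have [_ ->] := seg_entries (hy i) l lN; rewrite // mulr0.
Qed.

Lemma decomp {v : 'cV[R]_n} : A *m v = 0 -> S (xb + v) ->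
  exists (c : 'cV[R]_n) (mu : R) (d : 'cV[R]_n),
    [/\ D d, mu <= 0, cprop c,
     forall l, l \in ~: B -> d l 0 = v l 0 - c l 0 - mu * (l == k)%:R
   & forall l, l \in ~: B -> 0 <= d l 0].
Proof.
move=> hv [c [mu [d [hc [hmu [hd heq]]]]]].
exists c, mu, d; split => //.
- exact: conv_entries.
- move=> l lN; have := congr1 (fun M : 'cV[R]_n => M l 0) heq.
  rewrite !mxE => h.
  have := r_N k l lN; rewrite mxE => hr; rewrite -hr; lra.
- by have [_ h] := D_prop hd.
Qed.

Lemma rk_notD : D (r k) -> False.
Proof.
move=> hD; case: hk => _ [_ [ha [_ hbo]]].
have [l0 [hl0 hC]] : exists l0, hitset B abar bbar C k l0.
  apply: contrapT => hne.
  move: ha; rewrite /alpha.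
  have -> : [set x%:E | x in hitset B abar bbar C k] = set0.
    by apply/seteqP; split => // x [y hy _]; apply: hne; exists y.
  by rewrite ereal_inf0.
have hub : forall t, 0 <= t -> ((l0 + t)%:E <= beta B abar bbar C k)%E.
  move=> t ht; apply: ereal_sup_ubound; exists (l0 + t) => //; split.
    exact: addr_ge0.
  by rewrite scalerDl addrA; apply: hD.
move: hub hbo (hub 0 (lexx _)); case: (beta B abar bbar C k) => [x | | ] //= hub _ _.
have h1 : 0 <= `|x| + 1 by rewrite addr_ge0 // normr_ge0.
have := hub _ h1.
rewrite lee_fin; have := ler_norm x; lra.
Qed.


Lemma kN : k \in ~: B.
Proof. by case: hk. Qed.

Lemma A_d d : D d -> A *m d = 0.
Proof. by move=> hd; have [] := D_prop hd. Qed.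

Lemma ray_out {j} {L : R} : j \in ~: B ->
  (forall x : R, 0 <= x <= U -> (~ N2 B abar bbar C j -> x = 0) -> x < L) ->
  S (xb + L *: r j) -> j != k /\ recc S (r j).
Proof.
move=> jN hL hS.
have hv : A *m (L *: r j) = 0 by rewrite -scalemxAr A_r // scaler0.
have [c [mu [d [hd hmu hc hde hdp]]]] := decomp hv hS.
have hcj : c j 0 < L by have [hc1 hc2] := hc j jN; apply: hL.
have ve : forall l, l \in ~: B -> (L *: r j) l 0 = L * (l == j)%:R.
  by move=> l lN; rewrite mxE r_N.
have hz : forall l, l \in ~: B -> l != j -> l != k -> d l 0 = 0.
  move=> l lN lj lk; have := hde l lN; rewrite ve // (negbTE lj) (negbTE lk) => h.
  move: h; rewrite /= ?mulr0n ?mulr1n => h. have := hdp l lN; have [/andP [hc0 _] _] := hc l lN; lra.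
case: (eqVneq j k) => [ejk | njk].
  exfalso; subst j.
  have hdk := hde k jN; rewrite ve // eqxx /= ?mulr0n ?mulr1n in hdk.
  have ht : 0 < d k 0 by lra.
  apply: rk_notD.
  have -> : r k = (d k 0)^-1 *: d.
    apply: uniqN; first exact: A_r.
      by rewrite -scalemxAr A_d // scaler0.
    move=> l lN; rewrite r_N // mxE.
    case: (eqVneq l k) => [-> | lk]; first by rewrite mulVf // gt_eqF.
    by rewrite (hz l) // mulr0.
  by apply: D_scale => //; rewrite invr_ge0 ltW.
split => //.
have hs : 0 < (L - c j 0)^-1 by rewrite invr_gt0 subr_gt0.
have hdj := hde j jN; rewrite ve // eqxx (negbTE njk) /= ?mulr0n ?mulr1n in hdj.
have -> : r j = (L - c j 0)^-1 *: d - ((L - c j 0)^-1 * d k 0) *: r k.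
  apply: uniqN; first exact: A_r.
    by rewrite mulmxBr -!scalemxAr A_d // A_r ?kN // !scaler0 subr0.
  move=> l lN; rewrite !mxE (notB lN).
  case: (eqVneq l j) => [-> | lj].
    rewrite ?eqxx (negbTE njk).
    have -> : d j 0 = L - c j 0 by rewrite hdj; lra.
    by rewrite mulVf ?gt_eqF ?subr_gt0 // mulr0 subr0.
  case: (eqVneq l k) => [-> | lk]; rewrite ?eqxx; first by rewrite mulr1 subrr.
  by rewrite ?(negbTE lk) (hz l) // mulr0 ?mulr0 subr0.
apply: K_reccS; first by apply: D_scale => //; exact: ltW.
by apply: mulr_ge0; [exact: ltW | exact: hdp kN].
Qed.


Lemma pair_out {i j} {L M : R} : i \in ~: B -> j \in ~: B -> i != j -> i != k ->
  U < L -> U < M -> S (xb + (L *: r i + M *: r j)) ->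
  exists g : R, 0 < g /\ recc S (r i + g *: r j).
Proof.
move=> iN jN nij nik hL hM hS.
have hv : A *m (L *: r i + M *: r j) = 0.
  by rewrite mulmxDr -!scalemxAr !A_r // !scaler0 addr0.
have [c [mu [d [hd hmu hc hde hdp]]]] := decomp hv hS.
have ve : forall l, l \in ~: B ->
    (L *: r i + M *: r j) l 0 = L * (l == i)%:R + M * (l == j)%:R.
  by move=> l lN; rewrite mxE [(L *: r i) l 0]mxE [(M *: r j) l 0]mxE !r_N.
have hz : forall l, l \in ~: B -> l != i -> l != j -> l != k -> d l 0 = 0.
  move=> l lN li lj lk; have := hde l lN.
  rewrite ve // (negbTE li) (negbTE lj) (negbTE lk) /= ?mulr0n => h.
  have := hdp l lN; have [/andP [hc0 _] _] := hc l lN; lra.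
have [/andP [hci0 hciU] _] := hc i iN.
have [/andP [hcj0 hcjU] _] := hc j jN.
have hdi : d i 0 = L - c i 0.
  have := hde i iN; rewrite ve // eqxx (negbTE nij) (negbTE nik) /= ?mulr0n ?mulr1n.
  lra.
have hdj : M - c j 0 <= d j 0.
  have := hde j jN; rewrite ve // eqxx eq_sym (negbTE nij) /= ?mulr0n ?mulr1n.
  case: (j == k) => /= ?; rewrite ?mulr0n ?mulr1n; lra.
have hs : 0 < (L - c i 0)^-1 by rewrite invr_gt0 subr_gt0; lra.
set s := (L - c i 0)^-1.
set t := if j == k then 0 else s * d k 0.
have ht : 0 <= t.
  rewrite /t; case: (j == k) => //; apply: mulr_ge0; [exact: ltW | exact: hdp kN].
exists (s * d j 0); split.
  by apply: mulr_gt0 => //; lra.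
have -> : r i + (s * d j 0) *: r j = s *: d - t *: r k.
  apply: uniqN.
  - by rewrite mulmxDr -scalemxAr !A_r // scaler0 addr0.
  - by rewrite mulmxBr -!scalemxAr A_d // A_r ?kN // !scaler0 subr0.
  move=> l lN; rewrite !mxE (notB lN).
  case: (eqVneq l i) => [-> | li].
    rewrite ?eqxx ?(negbTE nij) ?(negbTE nik) hdi /s mulVf; last by rewrite gt_eqF // subr_gt0; lra.
    by rewrite ?mulr0 ?addr0 ?subr0.
  case: (eqVneq l j) => [-> | lj].
    rewrite ?eqxx /t; case: (j == k); by rewrite ?mulr0 ?mulr1 ?subr0 ?add0r.
  case: (eqVneq l k) => [elk | lk].
    subst l; rewrite ?eqxx /t eq_sym (negbTE lj).
    by rewrite !mulr0 mulr1 add0r subrr.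
  by rewrite ?(negbTE li) ?(negbTE lj) ?(negbTE lk) (hz l) // !mulr0 add0r subr0.
apply: K_reccS => //.
by apply: D_scale => //; exact: ltW.
Qed.


Lemma conv_PB (X : set 'cV[R]_n) : X `<=` PB B A b -> convhull X `<=` PB B A b.
Proof.
move=> hX x [p [w [y [hw [hs [hy ->]]]]]]; split.
  rewrite mulmx_sumr (eq_bigr (fun i => w i *: b)); last first.
    by move=> i _; rewrite -scalemxAr (hX _ (hy i)).1.
  by rewrite -scaler_suml hs scale1r.
move=> l lN; rewrite summxE; apply: sumr_ge0 => i _; rewrite mxE.
by apply: mulr_ge0 => //; exact: (hX _ (hy i)).2 l lN.
Qed.

Lemma ent (x : 'cV[R]_n) i : `|x i 0| <= `|x|.
Proof. rewrite [X in _ <= X]/Num.norm /= mx_normrE.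
apply: (le_trans _ (le_bigmax _ _ (i, 0))) => //. Qed.

Lemma closure_PB (X : set 'cV[R]_n) : X `<=` PB B A b -> closure X `<=` PB B A b.
Proof.
move=> hX x hx.
have approx : forall e : R, 0 < e -> exists y, X y /\ forall l, `|x l 0 - y l 0| < e.
  move=> e he; have [y [Xy bxy]] := hx _ (nbhsx_ballx x e he).
  exists y; split => // l; move: bxy; rewrite -ball_normE /= => bxy.
  by apply: le_lt_trans bxy; move: (ent (x - y) l); rewrite !mxE.
split.
  apply/hiff => i iB.
  set K := 1 + \sum_(j in ~: B) `|abar i j|.
  have Kpos : 0 < K by rewrite /K ltr_pwDl // sumr_ge0 // => j _; exact: normr_ge0.
  apply: contrapT => hne.
  set dl := `|x i 0 - (bbar i - \sum_(j in ~: B) abar i j * x j 0)|.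
  have dpos : 0 < dl by rewrite normr_gt0 subr_eq0; apply/eqP.
  have [y [Xy hy]] := approx (dl / K) (divr_gt0 dpos Kpos).
  have Fy := (hiff y).1 (hX y Xy).1 i iB.
  have eq1 : x i 0 - (bbar i - \sum_(j in ~: B) abar i j * x j 0) =
      (x i 0 - y i 0) + \sum_(j in ~: B) abar i j * (x j 0 - y j 0).
    rewrite [X in _ = _ + X](eq_bigr (fun j => abar i j * x j 0 - abar i j * y j 0)); last first.
      by move=> j _; rewrite mulrBr.
    rewrite sumrB Fy; lra.
  have hsum : `|\sum_(j in ~: B) abar i j * (x j 0 - y j 0)| <=
      (\sum_(j in ~: B) `|abar i j|) * (dl / K).
    apply: le_trans (ler_norm_sum _ _ _) _; rewrite mulr_suml.
    apply: ler_sum => j _; rewrite normrM; apply: ler_wpM2l; first exact: normr_ge0.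
    exact: ltW.
  have h3 := ler_normD (x i 0 - y i 0) (\sum_(j in ~: B) abar i j * (x j 0 - y j 0)).
  rewrite -eq1 -/dl in h3.
  have h4 : dl / K + (\sum_(j in ~: B) `|abar i j|) * (dl / K) = dl.
    by rewrite -{1}(mul1r (dl / K)) -mulrDl -/K mulrC divfK // gt_eqF.
  have h1 := hy i.
  set P := (\sum_(j in ~: B) `|abar i j|) * (dl / K) in hsum h4.
  lra.
move=> l lN; rewrite leNgt; apply/negP => hneg.
have hpos : 0 < - x l 0 by rewrite oppr_gt0.
have [y [Xy hy]] := approx (- x l 0) hpos.
have := (hX y Xy).2 l lN; have := hy l; have := ler_norm (y l 0 - x l 0).
rewrite distrC; lra.
Qed.


Lemma k_notJ : ~ Jset B abar bbar C k k.
Proof.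
move=> [_ hr].
have hS : S (xb + (U + 1) *: r k).
  by apply: hr; [exact: xb_S | rewrite addr_ge0 // U_ge0].
have [] := ray_out kN _ hS; first by move=> x /andP [_ hx] _; lra.
by rewrite eqxx.
Qed.

Lemma sum_lift (F : 'I_n.+1 -> R) :
  \sum_(i < n.+1) F i = \sum_(j < n) F (lift ord_max j) + F ord_max.
Proof.
rewrite big_ord_recr /=; congr (_ + _); apply: eq_bigr => j _.
by congr F; apply: val_inj => /=; rewrite /bump leqNgt ltn_ord.
Qed.

Variables (i0 : 'I_n) (sg : 'I_n -> 'I_n).
Hypotheses (hi0N : i0 \in ~: B) (hi0J : ~ Jset B abar bbar C k i0)
  (hi0N2 : ~ N2 B abar bbar C i0) (hsgN : forall i, sg i \in ~: B)
  (hsg : forall i, Jset B abar bbar C k i ->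
     ~ Jset B abar bbar C k (sg i) /\ ~ (0 < gamma' B abar bbar C k i (sg i))%E).

Local Notation T := (PB B A b `\` S).

Definition mJ j : R := if pselect (Jset B abar bbar C k j) then U + 1 else 0.

Lemma mJ_ge0 j : 0 <= mJ j.
Proof. rewrite /mJ; case: (pselect _) => h; [by rewrite addr_ge0 // U_ge0 | exact: lexx]. Qed.

Lemma T_e eps : 0 < eps -> T (xb + eps *: r i0).
Proof.
move=> he; split.
  apply: PB_xbv; first by rewrite -scalemxAr A_r // scaler0.
  move=> l lN; rewrite mxE r_N //; apply: mulr_ge0; [exact: ltW | exact: ler0n].
move=> hS.
have hL : forall x : R, 0 <= x <= U -> (~ N2 B abar bbar C i0 -> x = 0) -> x < eps.
  by move=> x _ /(_ hi0N2) ->.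
have [_ hr] := ray_out hi0N hL hS.
by apply: hi0J; split.
Qed.

Lemma ptE j (L c : R) s l : l \in ~: B ->
  (xb + (L *: r j + c *: r s)) l 0 = L * (l == j)%:R + c * (l == s)%:R.
Proof.
move=> lN; rewrite mxE xb_N // add0r mxE [(L *: r j) l 0]mxE [(c *: r s) l 0]mxE.
by rewrite !r_N.
Qed.

Lemma T_pt j (L : R) : j \in ~: B -> U < L ->
  T (xb + (L *: r j + mJ j *: r (sg j))).
Proof.
move=> jN hL; split.
  apply: PB_xbv; first by rewrite mulmxDr -!scalemxAr !A_r // !scaler0 addr0.
  move=> l lN; rewrite mxE [(L *: r j) l 0]mxE [(_ *: r (sg j)) l 0]mxE !r_N //.
  apply: addr_ge0; apply: mulr_ge0; rewrite ?ler0n ?mJ_ge0 //.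
  by apply: le_trans (ltW hL); exact: U_ge0.
move=> hS; move: hS; rewrite /mJ; case: (pselect _) => hJ /= hS.
  have [hnJ hng] := hsg j hJ.
  have nij : j != sg j by apply/eqP => e; apply: hnJ; rewrite -e.
  have njk : j != k by apply/eqP => e; apply: k_notJ; move: hJ; rewrite e.
  have hU : U < U + 1 by lra.
  have [g [gpos hrg]] := pair_out jN (hsgN j) nij njk hL hU hS.
  apply: hng; apply: (@lt_le_trans _ _ g%:E); first by rewrite lte_fin.
  by apply: ereal_sup_ubound; exists g => //; split => //; exact: ltW.
move: hS; rewrite scale0r addr0 => hS.
have hL' : forall x : R, 0 <= x <= U -> (~ N2 B abar bbar C j -> x = 0) -> x < L.
  by move=> x /andP [_ hx] _; lra.
have [_ hr] := ray_out jN hL' hS.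
by apply: hJ; split.
Qed.


Definition yv (x : 'cV[R]_n) j : R := if j \in ~: B then x j 0 else 0.
Definition Sy x := \sum_(j < n) yv x j.
Definition Gv x := \sum_(j < n) (yv x j * mJ j) *: r (sg j) + r i0.

Lemma sum_delta (f : 'I_n -> R) l : \sum_(j < n) f j * (l == j)%:R = f l.
Proof.
rewrite (bigD1 l) //= eqxx mulr1 big1 ?addr0 // => j jl.
by rewrite eq_sym (negbTE jl) mulr0.
Qed.

Lemma A_G x : A *m Gv x = 0.
Proof.
rewrite mulmxDr mulmx_sumr A_r // addr0 big1 // => j _.
by rewrite -scalemxAr A_r // scaler0.
Qed.

Lemma G_N x l : l \in ~: B ->
  Gv x l 0 = \sum_(j < n) yv x j * mJ j * (l == sg j)%:R + (l == i0)%:R.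
Proof.
move=> lN; rewrite [LHS]mxE summxE r_N //; congr (_ + _).
by apply: eq_bigr => j _; rewrite [LHS]mxE r_N.
Qed.

Lemma comb x (L : R) : PB B A b x -> U < L -> Sy x < L ->
  convhull T (x + L^-1 *: Gv x).
Proof.
move=> hx hU hS.
have Lpos : 0 < L by apply: le_lt_trans hU; exact: U_ge0.
have yge : forall j, 0 <= yv x j.
  by move=> j; rewrite /yv; case: ifP => // jN; apply: hx.2.
have LS : 0 < L - Sy x by rewrite subr_gt0.
set e := xb + (L - Sy x)^-1 *: r i0.
have Te : T e by apply: T_e; rewrite invr_gt0.
pose P j := if j \in ~: B then xb + (L *: r j + mJ j *: r (sg j)) else e.
have TP : forall j, T (P j).
  by move=> j; rewrite /P; case: ifP => jN; [exact: T_pt | exact: Te].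
pose w (i : 'I_n.+1) := if unlift ord_max i is Some j then yv x j / L else 1 - Sy x / L.
pose z (i : 'I_n.+1) := if unlift ord_max i is Some j then P j else e.
have hw : forall i, 0 <= w i.
  move=> i; rewrite /w; case: unlift => [j|]; first by apply: divr_ge0 => //; exact: ltW.
  by rewrite subr_ge0 ler_pdivrMr // mul1r ltW.
have hs : \sum_(i < n.+1) w i = 1.
  rewrite sum_lift /w unlift_none.
  under eq_bigr do rewrite liftK.
  by rewrite -mulr_suml -/(Sy x) addrC subrK.
have hconv : convhull T (\sum_(i < n.+1) w i *: z i).
  exists n.+1, w, z; split => //; split => //; split => //.
  by move=> i; rewrite /z; case: unlift.
suff <- : \sum_(i < n.+1) w i *: z i = x + L^-1 *: Gv x by [].
apply: (addIr (- xb)); apply: uniqN.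
- have hsub : T `<=` PB B A b by move=> y [].
  have := (conv_PB T hsub _ hconv).1.
  by rewrite mulmxDr mulmxN A_xb => ->; rewrite subrr.
- by rewrite !mulmxDr mulmxN -scalemxAr A_G scaler0 hx.1 A_xb addr0 subrr.
move=> l lN.
rewrite [LHS]mxE [RHS]mxE [(x + _) l 0]mxE [(- xb) l 0]mxE xb_N // oppr0 !addr0.
rewrite [(_ *: Gv x) l 0]mxE G_N //.
rewrite summxE.
under eq_bigr do rewrite [(w _ *: z _) l 0]mxE.
rewrite sum_lift /w /z unlift_none.
under eq_bigr do rewrite liftK.
have eE : e l 0 = (L - Sy x)^-1 * (l == i0)%:R.
  by rewrite /e [LHS]mxE xb_N // add0r [LHS]mxE r_N.
have PE : forall j, yv x j / L * P j l 0 =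
    yv x j * (l == j)%:R + L^-1 * (yv x j * mJ j * (l == sg j)%:R).
  move=> j; rewrite /P /yv; case: ifP => jN.
    rewrite ptE //; field; exact: lt0r_neq0.
  by rewrite !mul0r mulr0 addr0.
under eq_bigr do rewrite PE.
rewrite big_split /= -mulr_sumr sum_delta eE mulrA.
have -> : (1 - Sy x / L) * (L - Sy x)^-1 = L^-1.
  field; rewrite ?lt0r_neq0 //.
have -> : yv x l = x l 0 by rewrite /yv lN.
by rewrite mulrDr addrA.
Qed.


Lemma PB_sub : PB B A b `<=` closure (convhull T).
Proof.
move=> x hx Bn /nbhs_ballP [e /= he sub].
set G := Gv x.
have Sge : 0 <= Sy x.
  apply: sumr_ge0 => j _; rewrite /yv; case: ifP => // jN; exact: hx.2.
have hq : 0 <= (`|G| + 1) / e.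
  by apply: divr_ge0; [rewrite addr_ge0 // normr_ge0 | exact: ltW].
set L := U + Sy x + 1 + (`|G| + 1) / e.
have hU0 := U_ge0.
have hUL : U < L by rewrite /L; lra.
have hSL : Sy x < L by rewrite /L; lra.
have Lpos : 0 < L by rewrite /L; lra.
exists (x + L^-1 *: G); split; first exact: comb.
apply: sub; rewrite -ball_normE /= opprD addrA subrr add0r normrN normrZ.
rewrite ger0_norm ?invr_ge0 ?ltW // mulrC ltr_pdivrMr //.
have hh : e * ((`|G| + 1) / e) = `|G| + 1 by rewrite mulrC divfK // gt_eqF.
rewrite /L mulrDr hh.
have hp : 0 < U + Sy x + 1 by lra.
have := mulr_gt0 he hp; lra.
Qed.

Theorem main_inner : closure (convhull T) = PB B A b.
Proof.
apply/seteqP; split; last exact: PB_sub.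
by apply: closure_PB; apply: conv_PB; move=> y [].
Qed.

End P10.

Theorem proposition10 (R : realType) (m n : nat)
  (A : 'M[R]_(m, n)) (b : 'cV[R]_m)
  (B : {set 'I_n}) (abar : 'I_n -> 'I_n -> R) (bbar : 'I_n -> R)
  (C : set 'cV[R]_n) (k : 'I_n) :
  \rank A = m ->
  #|B| = m ->
  (forall i, i \in B -> 0 <= bbar i) ->
  (forall x : 'cV[R]_n, A *m x = b <->
     (forall i, i \in B ->
        x i 0 = bbar i - \sum_(j in ~: B) abar i j * x j 0)) ->
  open C ->
  convex_set (C : set (convex_lmodType 'cV[R]_n)) ->
  ~ closure C (xbar B bbar) ->
  recc C `<=` recc (PB B A b) ->
  N2 B abar bbar C k ->
  ~ (N0 B abar bbar C `<=` Jset B abar bbar C k) ->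
  M' B abar bbar C k = set0 ->
  closure (convhull (PB B A b `\` SkC B abar bbar C k)) = PB B A b.
Proof.
move=> _ _ _ hiff _ _ _ hrec hk hN0 hM'.
have [i0 [hi0 hi0J]] : exists i0, N0 B abar bbar C i0 /\ ~ Jset B abar bbar C k i0.
  apply: contrapT => h; apply: hN0 => i hi; apply: contrapT => hJ.
  by apply: h; exists i.
have hi0N : i0 \in ~: B by case: hi0.
have hi0N2 : ~ N2 B abar bbar C i0.
  by case: hi0 => _ [ha _] [_ [_ [hlt _]]]; move: hlt; rewrite ha.
have hkN : k \in ~: B by case: hk.
have [sg hsg] : exists sg : 'I_n -> 'I_n, forall i, sg i \in ~: B /\
    (Jset B abar bbar C k i -> ~ Jset B abar bbar C k (sg i) /\
       ~ (0 < gamma' B abar bbar C k i (sg i))%E).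
  have := @choice 'I_n 'I_n (fun i s => s \in ~: B /\
    (Jset B abar bbar C k i -> ~ Jset B abar bbar C k s /\
       ~ (0 < gamma' B abar bbar C k i s)%E)).
  case.
    move=> i; case: (pselect (Jset B abar bbar C k i)) => hJ; last by exists k.
    have : ~ M' B abar bbar C k i by rewrite hM'.
    move=> hnM; apply: contrapT => hne; apply: hnM; split => // j jN hnj.
    apply: contrapT => hg; apply: hne; exists j; split => //.
  by move=> f hf; exists f.
exact: (main_inner _ _ _ _ _ _ _ _ _ _ hiff hrec hk _ _ hi0N hi0J hi0N2 (fun i => (hsg i).1) (fun i => (hsg i).2)).
Qed.
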